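(* Let $G$ be a stable (causal) LTI system with $m$ inputs and $p$ outputs. With respect to the adjacency relation $\mathrm{Adj}$ below, with $K=\mathrm{diag}(k_1,\dots,k_m)$ and $|k|_2=(\sum_{i=1}^m k_i^2)^{1/2}$, $$\|GK\|_2\le \Delta^{m,p}_2 G\le |k|_2\,\|G\|_2.$$
   Context: Signals are maps $u:\mathbb N\to\mathbb R^m$. For $k=(k_1,\dots,k_m)$ with all $k_i>0$, two input signals $u,u'$ are adjacent, $\mathrm{Adj}(u,u')$, iff for every $i\in\{1,\dots,m\}$ there exist $t_i\in\mathbb N$ and $\alpha_i\in\mathbb R$ with $|\alpha_i|\le k_i$ and $u'_i-u_i=\alpha_i\delta_{t_i}$, where $\delta_{t}$ is the discrete unit impulse at time $t$. The $\ell_2$-sensitivity of a system $G$ with $m$ inputs and $p$ outputs is $\Delta^{m,p}_2 G=\sup_{\mathrm{Adj}(u,u')}\|G(u-u')\|_2$, where $\|v\|_2=(\sum_t |v_t|_2^2)^{1/2}$. The $\mathcal H_2$ norm of an LTI system $G$ with $m$ inputs is $\|G\|_2^2=\sum_{i=1}^m\|G\delta_0e_i\|_2^2=\frac{1}{2\pi}\int_{-\pi}^{\pi}\mathrm{Tr}(G(e^{j\omega})^*G(e^{j\omega}))\,d\omega$, $e_i$ being the standard basis vectors. *)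

(* Defs.v *)
From Stdlib Require Import Reals Lra Lia Arith.
Open Scope R_scope.

Fixpoint fsum (n : nat) (f : nat -> R) : R :=
  match n with
  | O => 0
  | S n' => fsum n' f + f n'
  end.

(* A signal with values in R^q is a map  nat (time) -> nat (component) -> R;
   only components 0..q-1 are meaningful. *)
Definition signal := nat -> nat -> R.

(* A causal LTI system with m inputs and p outputs, given by its impulse
   response h : nat -> 'M_(p,m) (h t o j = entry (o,j) of the t-th Markov
   parameter). *)
Definition sys_apply (m : nat) (h : nat -> nat -> nat -> R) (u : signal) : signal :=
  fun t o => fsum (S t) (fun s => fsum m (fun j => h (t - s)%nat o j * u s j)).

Definition stable (m p : nat) (h : nat -> nat -> nat -> R) : Prop :=
  forall o j, (o < p)%nat -> (j < m)%nat ->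
    exists L, infinite_sum (fun t => Rabs (h t o j)) L.

Definition delta (t0 t : nat) : R := if Nat.eqb t t0 then 1 else 0.

Definition impulse_input (i : nat) : signal :=
  fun t j => delta 0 t * (if Nat.eqb j i then 1 else 0).

Definition has_l2norm (p : nat) (v : signal) (r : R) : Prop :=
  exists L, infinite_sum (fun t => fsum p (fun o => (v t o) ^ 2)) L /\ r = sqrt L.

Definition has_H2norm (m p : nat) (h : nat -> nat -> nat -> R) (r : R) : Prop :=
  exists nrm : nat -> R,
    (forall i, (i < m)%nat -> has_l2norm p (sys_apply m h (impulse_input i)) (nrm i)) /\
    r = sqrt (fsum m (fun i => (nrm i) ^ 2)).

Definition Adj (m : nat) (k : nat -> R) (u u' : signal) : Prop :=
  forall i, (i < m)%nat ->
    exists (ti : nat) (alpha : R), Rabs alpha <= k i /\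
      forall t, u' t i - u t i = alpha * delta ti t.

(* Set of values ||G(u - u')||_2 over adjacent pairs; the l2-sensitivity is
   its supremum. *)
Definition sens_set (m p : nat) (k : nat -> R) (h : nat -> nat -> nat -> R) (r : R) : Prop :=
  exists u u', Adj m k u u' /\
    has_l2norm p (sys_apply m h (fun t j => u t j - u' t j)) r.

(* The system G K, K = diag(k_1,...,k_m). *)
Definition scale_inputs (k : nat -> R) (h : nat -> nat -> nat -> R) : nat -> nat -> nat -> R :=
  fun t o j => h t o j * k j.

Definition vnorm2 (m : nat) (k : nat -> R) : R := sqrt (fsum m (fun i => (k i) ^ 2)).

(* Main.v *)
Require Import Defs.
From Stdlib Require Import Reals Lra Lia Arith Classical ClassicalEpsilon FunctionalExtensionality.
Open Scope R_scope.

Lemma fsum_ext n f g : (forall i, (i < n)%nat -> f i = g i) -> fsum n f = fsum n g.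
Proof. induction n; simpl; intros H; auto. rewrite IHn by (intros; apply H; lia). rewrite H by lia; auto. Qed.

Lemma fsum_plus n f g : fsum n (fun i => f i + g i) = fsum n f + fsum n g.
Proof. induction n; simpl; [lra|]. rewrite IHn; lra. Qed.

Lemma fsum_scal n c f : fsum n (fun i => c * f i) = c * fsum n f.
Proof. induction n; simpl; [lra|]. rewrite IHn; lra. Qed.

Lemma fsum_zero n : fsum n (fun _ => 0) = 0.
Proof. induction n; simpl; [lra|]. rewrite IHn; lra. Qed.

Lemma fsum_le n f g : (forall i, (i < n)%nat -> f i <= g i) -> fsum n f <= fsum n g.
Proof. induction n; simpl; intros H; [lra|]. assert (H1 := H n ltac:(lia)). assert (fsum n f <= fsum n g) by (apply IHn; intros; apply H; lia). lra. Qed.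

Lemma fsum_nonneg n f : (forall i, (i < n)%nat -> 0 <= f i) -> 0 <= fsum n f.
Proof. intros H. rewrite <- (fsum_zero n). apply fsum_le; auto. Qed.

Lemma fsum_swap n m (f : nat -> nat -> R) :
  fsum n (fun i => fsum m (fun j => f i j)) = fsum m (fun j => fsum n (fun i => f i j)).
Proof. induction n; simpl. symmetry; apply fsum_zero. rewrite IHn, <- fsum_plus. reflexivity. Qed.

Lemma fsum_delta n a f : fsum n (fun s => f s * delta a s) = if Nat.ltb a n then f a else 0.
Proof.
  induction n; simpl; [reflexivity|]. rewrite IHn. unfold delta.
  destruct (Nat.eqb_spec n a); destruct (Nat.ltb_spec a n); destruct (Nat.ltb_spec a (S n));
  try lia; subst; lra.
Qed.

Lemma sum_f_R0_fsum f n : sum_f_R0 f n = fsum (S n) f.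
Proof. induction n; simpl; [lra|]. rewrite IHn. simpl. lra. Qed.

Lemma fsum_term n f t : (forall i, 0 <= f i) -> (t < n)%nat -> f t <= fsum n f.
Proof.
  induction n; intros H Ht; [lia|]. simpl.
  assert (0 <= fsum n f) by (apply fsum_nonneg; auto).
  destruct (Nat.eq_dec t n). subst; lra. assert (f t <= fsum n f) by (apply IHn; auto; lia). specialize (H n); lra.
Qed.

Lemma cv_const c : Un_cv (fun _ => c) c.
Proof. intros e He. exists 0%nat. intros. unfold Rdist. rewrite Rminus_diag, Rabs_R0. lra. Qed.

Lemma is_partial_le f L : infinite_sum f L -> (forall t, 0 <= f t) -> forall N, fsum N f <= L.
Proof.
  intros H Hf N.
  assert (G : forall n, sum_f_R0 f n <= L).
  { intros n. apply (growing_ineq (sum_f_R0 f)); auto. intros k. simpl. specialize (Hf (S k)); lra. }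
  destruct N. simpl. specialize (G 0%nat). simpl in G. specialize (Hf 0%nat). lra.
  rewrite <- sum_f_R0_fsum. apply G.
Qed.

Lemma bounded_series f B : (forall t, 0 <= f t) -> (forall N, fsum N f <= B) ->
  exists L, infinite_sum f L /\ L <= B.
Proof.
  intros Hf HB.
  assert (Hg : Un_growing (sum_f_R0 f)) by (intros k; simpl; specialize (Hf (S k)); lra).
  assert (Hu : has_ub (sum_f_R0 f)).
  { exists B. intros x [n ->]. rewrite sum_f_R0_fsum. apply HB. }
  destruct (growing_cv _ Hg Hu) as [L HL]. exists L. split; [exact HL|].
  apply (Rle_cv_lim (Un := sum_f_R0 f) (Vn := fun _ => B)); auto.
  intros n; rewrite sum_f_R0_fsum; apply HB. apply cv_const.
Qed.

Lemma limit_le f L B : infinite_sum f L -> (forall N, fsum N f <= B) -> L <= B.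
Proof.
  intros HL HB. apply (Rle_cv_lim (Un := sum_f_R0 f) (Vn := fun _ => B)); auto.
  intros n; rewrite sum_f_R0_fsum; apply HB. apply cv_const.
Qed.

Definition D (N p : nat) (x y : signal) : R :=
  fsum N (fun t => fsum p (fun o => x t o * y t o)).

Lemma D_nonneg N p x : 0 <= D N p x x.
Proof. apply fsum_nonneg; intros; apply fsum_nonneg; intros. apply Rle_0_sqr. Qed.

Lemma D_quad N p x y l :
  D N p (fun t o => x t o + l * y t o) (fun t o => x t o + l * y t o)
  = D N p x x + 2 * l * D N p x y + l * l * D N p y y.
Proof.
  unfold D. rewrite <- !fsum_scal, <- !fsum_plus. apply fsum_ext; intros.
  rewrite <- !fsum_scal, <- !fsum_plus. apply fsum_ext; intros. ring.
Qed.

Lemma D_scal N p c x : D N p (fun t o => c * x t o) (fun t o => c * x t o) = c * c * D N p x x.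
Proof.
  unfold D. rewrite <- !fsum_scal. apply fsum_ext; intros.
  rewrite <- !fsum_scal. apply fsum_ext; intros. ring.
Qed.

Lemma D_sym N p x y : D N p x y = D N p y x.
Proof. unfold D. apply fsum_ext; intros; apply fsum_ext; intros; ring. Qed.

Lemma CS2 N p x y : D N p x y * D N p x y <= D N p x x * D N p y y.
Proof.
  set (a := D N p x x); set (b := D N p y y); set (c := D N p x y).
  assert (Q : forall l, 0 <= a + 2 * l * c + l * l * b).
  { intros l. unfold a, b, c. rewrite <- D_quad. apply D_nonneg. }
  assert (Ha : 0 <= a) by apply D_nonneg. assert (Hb : 0 <= b) by apply D_nonneg.
  destruct (Rle_lt_or_eq_dec 0 b Hb) as [Hb'|Hb'].
  - specialize (Q (- c / b)).
    assert (E : a + 2 * (- c / b) * c + (- c / b) * (- c / b) * b = a - c * c / b) by (field; lra).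
    rewrite E in Q. assert (c * c / b <= a) by lra.
    apply (Rmult_le_compat_r b) in H; [|lra]. unfold Rdiv in H.
    rewrite Rmult_assoc, Rinv_l, Rmult_1_r in H by lra. lra.
  - rewrite <- Hb'. destruct (Req_dec c 0) as [->|Hc]. lra.
    specialize (Q (- (a + 1) / (2 * c))). rewrite <- Hb' in Q.
    assert (E : a + 2 * (- (a + 1) / (2 * c)) * c + 0 = -1) by (field; auto).
    lra.
Qed.

Lemma CS N p x y : D N p x y <= sqrt (D N p x x) * sqrt (D N p y y).
Proof.
  destruct (Rle_or_lt (D N p x y) 0).
  - apply Rle_trans with 0; auto. apply Rmult_le_pos; apply sqrt_pos.
  - rewrite <- sqrt_mult_alt by apply D_nonneg. rewrite <- (sqrt_square (D N p x y)) by lra.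
    apply sqrt_le_1_alt. apply CS2.
Qed.

Lemma D_plus_expand N p x y :
  D N p (fun t o => x t o + y t o) (fun t o => x t o + y t o)
  = D N p x x + 2 * D N p x y + D N p y y.
Proof.
  unfold D. rewrite <- !fsum_scal, <- !fsum_plus. apply fsum_ext; intros.
  rewrite <- !fsum_scal, <- !fsum_plus. apply fsum_ext; intros. ring.
Qed.

Lemma sqrt_le_sum a b : 0 <= a -> 0 <= b -> sqrt a <= b -> a <= b * b.
Proof.
  intros Ha Hb H. rewrite <- (sqrt_sqrt a) by auto.
  apply Rmult_le_compat; auto using sqrt_pos.
Qed.

Lemma mink N p x y :
  sqrt (D N p (fun t o => x t o + y t o) (fun t o => x t o + y t o))
  <= sqrt (D N p x x) + sqrt (D N p y y).
Proof.
  rewrite D_plus_expand. assert (H := CS N p x y).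
  assert (Hx := D_nonneg N p x). assert (Hy := D_nonneg N p y).
  assert (S : 0 <= sqrt (D N p x x) + sqrt (D N p y y)) by (pose proof (sqrt_pos (D N p x x)); pose proof (sqrt_pos (D N p y y)); lra).
  rewrite <- (sqrt_square (sqrt (D N p x x) + sqrt (D N p y y))) by auto.
  apply sqrt_le_1_alt.
  replace ((sqrt (D N p x x) + sqrt (D N p y y)) * (sqrt (D N p x x) + sqrt (D N p y y)))
    with (sqrt (D N p x x) * sqrt (D N p x x) + 2 * (sqrt (D N p x x) * sqrt (D N p y y)) + sqrt (D N p y y) * sqrt (D N p y y)) by ring.
  rewrite !sqrt_sqrt by auto. lra.
Qed.

Lemma mink_sum N p n (y : nat -> signal) :
  sqrt (D N p (fun t o => fsum n (fun j => y j t o)) (fun t o => fsum n (fun j => y j t o)))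
  <= fsum n (fun j => sqrt (D N p (y j) (y j))).
Proof.
  induction n; simpl.
  - assert (E : D N p (fun _ _ => 0) (fun _ _ => 0) = 0).
    { unfold D. transitivity (fsum N (fun _ => 0)); [|apply fsum_zero]. apply fsum_ext; intros.
      transitivity (fsum p (fun _ => 0)); [|apply fsum_zero]. apply fsum_ext; intros. ring. }
    rewrite E, sqrt_0. right; reflexivity.
  - eapply Rle_trans. apply (mink N p (fun t o => fsum n (fun j => y j t o)) (y n)). lra.
Qed.

Definition ser (p : nat) (x : signal) : nat -> R := fun t => fsum p (fun o => (x t o) ^ 2).
Definition fen p x L := infinite_sum (ser p x) L.

Lemma ser_D N p x : fsum N (ser p x) = D N p x x.
Proof. unfold ser, D. apply fsum_ext; intros; apply fsum_ext; intros; ring. Qed.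

Lemma ser_nonneg p x t : 0 <= ser p x t.
Proof. unfold ser. apply fsum_nonneg; intros. apply pow2_ge_0. Qed.

Lemma fe_partial p x L : fen p x L -> forall N, D N p x x <= L.
Proof. intros H N. rewrite <- ser_D. apply is_partial_le; auto. apply ser_nonneg. Qed.

Lemma fe_nonneg p x L : fen p x L -> 0 <= L.
Proof. intros H. apply (fe_partial p x L H 0%nat). Qed.

Lemma fe_bound p x B : (forall N, D N p x x <= B) -> exists L, fen p x L /\ L <= B.
Proof. intros H. apply bounded_series. apply ser_nonneg. intros N; rewrite ser_D; auto. Qed.

Lemma fe_le p x L B : fen p x L -> (forall N, D N p x x <= B) -> L <= B.
Proof. intros H HB. apply (limit_le (ser p x)); auto. intros N; rewrite ser_D; auto. Qed.

Lemma fe_cv p x L : fen p x L <-> Un_cv (fun n => D (S n) p x x) L.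
Proof.
  assert (E : sum_f_R0 (ser p x) = (fun n => D (S n) p x x)).
  { apply functional_extensionality; intros n. rewrite sum_f_R0_fsum, ser_D. reflexivity. }
  unfold fen, infinite_sum. change (Un_cv (sum_f_R0 (ser p x)) L <-> Un_cv (fun n => D (S n) p x x) L).
  rewrite E. tauto.
Qed.

Lemma fe_lin p x y a b s : fen p x a -> fen p y b -> s * s = 1 ->
  exists c, fen p (fun t o => x t o + s * y t o) c.
Proof.
  intros Ha Hb Hs.
  assert (Pa := sqrt_pos a). assert (Pb := sqrt_pos b).
  destruct (fe_bound p (fun t o => x t o + s * y t o) ((sqrt a + sqrt b) * (sqrt a + sqrt b))) as [c [Hc _]].
  2: exists c; auto.
  intros N. apply sqrt_le_sum. apply D_nonneg. lra.
  eapply Rle_trans. apply (mink N p x (fun t o => s * y t o)).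
  rewrite D_scal, Hs, Rmult_1_l.
  apply Rplus_le_compat; apply sqrt_le_1_alt; eapply fe_partial; eauto.
Qed.

Lemma parallelogram p x y a b c d : fen p x a -> fen p y b ->
  fen p (fun t o => x t o + 1 * y t o) c -> fen p (fun t o => x t o + -1 * y t o) d ->
  c + d = 2 * a + 2 * b.
Proof.
  rewrite !fe_cv. intros Ha Hb Hc Hd.
  assert (H1 := CV_plus _ _ _ _ Hc Hd).
  assert (H2 := CV_plus _ _ _ _ (CV_mult _ _ _ _ (cv_const 2) Ha) (CV_mult _ _ _ _ (cv_const 2) Hb)).
  apply (UL_sequence _ _ _ H1).
  assert (E : (fun i : nat =>
     (fun n : nat => D (S n) p (fun t o : nat => x t o + 1 * y t o) (fun t o : nat => x t o + 1 * y t o)) i +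
     (fun n : nat => D (S n) p (fun t o : nat => x t o + -1 * y t o) (fun t o : nat => x t o + -1 * y t o)) i)
   = (fun i : nat => (fun i0 : nat => (fun _ : nat => 2) i0 * (fun n : nat => D (S n) p x x) i0) i +
     (fun i0 : nat => (fun _ : nat => 2) i0 * (fun n : nat => D (S n) p y y) i0) i)).
  { apply functional_extensionality; intros n. simpl. rewrite !D_quad. ring. }
  rewrite E; exact H2.
Qed.

Lemma sys_swap m h d t o : sys_apply m h d t o = fsum m (fun j => fsum (S t) (fun s => h (t - s)%nat o j * d s j)).
Proof. unfold sys_apply. apply fsum_swap. Qed.

Lemma sys_imp m h (a : nat -> R) t o :
  sys_apply m h (fun s j => a j * delta 0 s) t o = fsum m (fun j => h t o j * a j).
Proof.
  rewrite sys_swap. apply fsum_ext; intros j _.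
  rewrite (fsum_ext _ _ (fun s => (h (t - s)%nat o j * a j) * delta 0 s)) by (intros; ring).
  rewrite fsum_delta. simpl. rewrite Nat.sub_0_r. reflexivity.
Qed.

Lemma sys_impulse m h i t o : (i < m)%nat -> sys_apply m h (impulse_input i) t o = h t o i.
Proof.
  intros Hi. replace (impulse_input i) with (fun s j => delta i j * delta 0 s).
  2:{ apply functional_extensionality; intros s; apply functional_extensionality; intros j.
      unfold impulse_input. fold (delta i j). ring. }
  rewrite sys_imp, fsum_delta. destruct (Nat.ltb_spec i m); [reflexivity|lia].
Qed.

Definition col (h : nat -> nat -> nat -> R) (j : nat) : signal := fun t o => h t o j.

Lemma D_S_p N p x : D N (S p) x x = D N p x x + fsum N (fun t => x t p * x t p).
Proof. unfold D. simpl. apply fsum_plus. Qed.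

Lemma col_bounded m p h j : stable m p h -> (j < m)%nat ->
  exists B, forall N, D N p (col h j) (col h j) <= B.
Proof.
  intros Hs Hj.
  assert (G : forall q, (q <= p)%nat -> exists B, forall N, D N q (col h j) (col h j) <= B).
  { induction q; intros Hq.
    - exists 0. intros N. unfold D. simpl. rewrite fsum_zero. lra.
    - destruct (IHq ltac:(lia)) as [B HB].
      destruct (Hs q j ltac:(lia) Hj) as [L HL].
      assert (Pa : forall t, 0 <= Rabs (h t q j)) by (intros; apply Rabs_pos).
      assert (Hle : forall t, Rabs (h t q j) <= L).
      { intros t. eapply Rle_trans. apply (fsum_term (S t) (fun t => Rabs (h t q j)) t); auto.
        apply is_partial_le; auto. }
      assert (L0 : 0 <= L) by (specialize (Hle 0%nat); specialize (Pa 0%nat); lra).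
      exists (B + L * L). intros N. rewrite D_S_p. apply Rplus_le_compat; auto.
      apply Rle_trans with (fsum N (fun t => L * Rabs (h t q j))).
      + apply fsum_le; intros t _. unfold col.
        apply Rle_trans with (Rabs (h t q j) * Rabs (h t q j)).
        rewrite <- Rabs_mult. right; symmetry; apply Rabs_pos_eq. apply Rle_0_sqr.
        apply Rmult_le_compat_r; auto.
      + rewrite fsum_scal. apply Rmult_le_compat_l; auto. apply is_partial_le; auto. }
  apply G; lia.
Qed.

Definition sh (h : nat -> nat -> nat -> R) ti j : signal :=
  fun t o => if Nat.ltb ti (S t) then h (t - ti)%nat o j else 0.

Lemma D_S_N N p x : D (S N) p x x = D N p x x + fsum p (fun o => x N o * x N o).
Proof. reflexivity. Qed.

Lemma sh_D N p h ti j : D N p (sh h ti j) (sh h ti j) = D (N - ti) p (col h j) (col h j).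
Proof.
  induction N.
  - reflexivity.
  - rewrite D_S_N, IHN. unfold sh. destruct (Nat.ltb_spec ti (S N)).
    + replace (S N - ti)%nat with (S (N - ti)) by lia. rewrite D_S_N. reflexivity.
    + replace (S N - ti)%nat with 0%nat by lia. replace (N - ti)%nat with 0%nat by lia.
      unfold D; simpl. rewrite (fsum_ext _ _ (fun _ => 0)) by (intros; ring). rewrite fsum_zero. ring.
Qed.

Lemma D_zero N p : D N p (fun _ _ => 0) (fun _ _ => 0) = 0.
Proof.
  unfold D. transitivity (fsum N (fun _ => 0)); [|apply fsum_zero]. apply fsum_ext; intros.
  transitivity (fsum p (fun _ => 0)); [|apply fsum_zero]. apply fsum_ext; intros. ring.
Qed.

Lemma fe_scale p x c L : fen p x L -> fen p (fun t o => c * x t o) (c * c * L).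
Proof.
  rewrite !fe_cv. intros H.
  assert (E : (fun n => D (S n) p (fun t o => c * x t o) (fun t o => c * x t o))
     = (fun n => (fun _ => c * c) n * (fun n => D (S n) p x x) n)).
  { apply functional_extensionality; intros n. rewrite D_scal. reflexivity. }
  rewrite E. apply CV_mult; auto. apply cv_const.
Qed.

Lemma channel_bound p h u u' j ti alpha E N :
  fen p (col h j) E ->
  (forall t, u' t j - u t j = alpha * delta ti t) ->
  sqrt (D N p (fun t o => fsum (S t) (fun s => h (t - s)%nat o j * (u s j - u' s j)))
              (fun t o => fsum (S t) (fun s => h (t - s)%nat o j * (u s j - u' s j))))
  <= Rabs alpha * sqrt E.
Proof.
  intros HE Hu.
  replace (fun t o => fsum (S t) (fun s => h (t - s)%nat o j * (u s j - u' s j)))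
    with (fun t o => (- alpha) * sh h ti j t o).
  2:{ apply functional_extensionality; intros t; apply functional_extensionality; intros o.
      rewrite (fsum_ext _ _ (fun s => (h (t - s)%nat o j * - alpha) * delta ti s)).
      2:{ intros s _. rewrite <- (Ropp_minus_distr (u' s j)), Hu. ring. }
      rewrite fsum_delta. unfold sh. destruct (Nat.ltb ti (S t)); ring. }
  rewrite D_scal, sh_D, sqrt_mult_alt by apply Rle_0_sqr.
  replace (- alpha * - alpha) with (Rsqr alpha) by (unfold Rsqr; ring).
  rewrite sqrt_Rsqr_abs. apply Rmult_le_compat_l. apply Rabs_pos.
  apply sqrt_le_1_alt. eapply fe_partial; eauto.
Qed.

Theorem theorem4 (m p : nat) (h : nat -> nat -> nat -> R) (k : nat -> R)
  (hk : forall i, (i < m)%nat -> 0 < k i)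
  (hstab : stable m p h) :
  (forall u u', Adj m k u u' ->
     exists r, has_l2norm p (sys_apply m h (fun t j => u t j - u' t j)) r) /\
  exists Delta nG nGK : R,
    is_lub (sens_set m p k h) Delta /\
    has_H2norm m p h nG /\
    has_H2norm m p (scale_inputs k h) nGK /\
    nGK <= Delta <= vnorm2 m k * nG.
Proof.
  assert (HE : forall j, exists E, (j < m)%nat -> fen p (col h j) E).
  { intros j. destruct (Nat.ltb_spec j m).
    - destruct (col_bounded m p h j hstab H) as [B HB].
      destruct (fe_bound p (col h j) B HB) as [E [HE _]]. exists E; auto.
    - exists 0; intros; lia. }
  set (E := fun j => proj1_sig (constructive_indefinite_description _ (HE j))).
  assert (HEj : forall j, (j < m)%nat -> fen p (col h j) (E j)).
  { intros j. unfold E. destruct (constructive_indefinite_description _ (HE j)); auto. }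
  assert (E0 : forall j, (j < m)%nat -> 0 <= E j) by (intros; eapply fe_nonneg; eauto).
  set (Sb := fsum m (fun j => k j * sqrt (E j))).
  assert (S0 : 0 <= Sb).
  { apply fsum_nonneg; intros. apply Rmult_le_pos; [apply Rlt_le, hk; auto|apply sqrt_pos]. }
  assert (UB : forall u u', Adj m k u u' -> forall N,
     D N p (sys_apply m h (fun t j => u t j - u' t j)) (sys_apply m h (fun t j => u t j - u' t j)) <= Sb * Sb).
  { intros u u' Hadj N. apply sqrt_le_sum; auto. apply D_nonneg.
    replace (sys_apply m h (fun t j => u t j - u' t j)) with
      (fun t o => fsum m (fun j => (fun j t o => fsum (S t) (fun s => h (t - s)%nat o j * (u s j - u' s j))) j t o)).
    2:{ apply functional_extensionality; intros t; apply functional_extensionality; intros o.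
        rewrite sys_swap. reflexivity. }
    eapply Rle_trans. apply mink_sum. unfold Sb. apply fsum_le. intros j Hj.
    destruct (Hadj j Hj) as [ti [alpha [Ha Hu]]].
    eapply Rle_trans. apply (channel_bound p h u u' j ti alpha (E j) N (HEj j Hj) Hu).
    apply Rmult_le_compat_r; auto. apply sqrt_pos. }
  set (nG := sqrt (fsum m (fun i => sqrt (E i) ^ 2))).
  assert (SB : Sb <= vnorm2 m k * nG).
  { assert (C := CS 1 m (fun _ j => k j) (fun _ j => sqrt (E j))).
    unfold D in C; simpl in C. rewrite !Rplus_0_l in C.
    unfold Sb, vnorm2, nG. 
    replace (fsum m (fun i => k i ^ 2)) with (fsum m (fun o => k o * k o)) by (apply fsum_ext; intros; ring).
    replace (fsum m (fun i => sqrt (E i) ^ 2)) with (fsum m (fun o => sqrt (E o) * sqrt (E o))) by (apply fsum_ext; intros; ring).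
    exact C. }
  assert (SENS : forall r, sens_set m p k h r -> r <= Sb).
  { intros r [u [u' [Hadj [L [HL ->]]]]].
    assert (L <= Sb * Sb) by (apply (fe_le p _ L (Sb * Sb) HL); apply UB; auto).
    rewrite <- (sqrt_square Sb) by auto. apply sqrt_le_1_alt; auto. }
  split.
  { intros u u' Hadj. destruct (fe_bound p _ _ (UB u u' Hadj)) as [L [HL _]].
    exists (sqrt L). exists L; split; auto. }
  set (v := fun i : nat => fun t o => h t o i * k i).
  set (Ev := fun i => k i * k i * E i).
  assert (Hv : forall i, (i < m)%nat -> fen p (v i) (Ev i)).
  { intros i Hi. replace (v i) with (fun t o => k i * col h i t o).
    apply fe_scale; auto.
    apply functional_extensionality; intros t; apply functional_extensionality; intros o.
    unfold v, col; ring. }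
  assert (Greedy : forall n, (n <= m)%nat -> exists sg : nat -> R, (forall i, sg i * sg i = 1) /\
     exists c, fen p (fun t o => fsum n (fun i => sg i * v i t o)) c /\ fsum n Ev <= c).
  { induction n; intros Hn.
    - exists (fun _ => 1). split; [intros; ring|].
      destruct (fe_bound p (fun t o => fsum 0 (fun i => 1 * v i t o)) 0) as [c [Hc _]].
      { intros N. simpl. rewrite D_zero. lra. }
      exists c. split; auto. simpl. eapply fe_nonneg; eauto.
    - destruct (IHn ltac:(lia)) as [sg [Hsg [c [Hc Hcle]]]].
      set (x := fun t o => fsum n (fun i => sg i * v i t o)).
      destruct (fe_lin p x (v n) c (Ev n) 1 Hc (Hv n ltac:(lia)) ltac:(ring)) as [c1 H1].
      destruct (fe_lin p x (v n) c (Ev n) (-1) Hc (Hv n ltac:(lia)) ltac:(ring)) as [c2 H2].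
      assert (Par := parallelogram p x (v n) c (Ev n) c1 c2 Hc (Hv n ltac:(lia)) H1 H2).
      destruct (Rle_or_lt (c + Ev n) c1) as [Hc1|Hc1].
      + exists (fun i => if Nat.eqb i n then 1 else sg i). split.
        { intros i; destruct (Nat.eqb i n); [ring|auto]. }
        exists c1. split.
        * replace (fun t o => fsum (S n) (fun i => (if Nat.eqb i n then 1 else sg i) * v i t o))
            with (fun t o => x t o + 1 * v n t o); auto.
          apply functional_extensionality; intros t; apply functional_extensionality; intros o.
          simpl. rewrite Nat.eqb_refl. unfold x. f_equal. apply fsum_ext; intros i Hi.
          destruct (Nat.eqb_spec i n); [lia|reflexivity].
        * simpl. lra.
      + exists (fun i => if Nat.eqb i n then -1 else sg i). split.
        { intros i; destruct (Nat.eqb i n); [ring|auto]. }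
        exists c2. split.
        * replace (fun t o => fsum (S n) (fun i => (if Nat.eqb i n then -1 else sg i) * v i t o))
            with (fun t o => x t o + -1 * v n t o); auto.
          apply functional_extensionality; intros t; apply functional_extensionality; intros o.
          simpl. rewrite Nat.eqb_refl. unfold x. f_equal. apply fsum_ext; intros i Hi.
          destruct (Nat.eqb_spec i n); [lia|reflexivity].
        * simpl. lra. }
  destruct (Greedy m (le_n m)) as [sg [Hsg [c [Hc Hcle]]]].
  assert (Elt : sens_set m p k h (sqrt c)).
  { exists (fun _ _ => 0), (fun t j => - (sg j * k j) * delta 0 t). split.
    - intros i Hi. exists 0%nat, (- (sg i * k i)). split.
      + assert (Hs : (sg i - 1) * (sg i + 1) = 0) by (specialize (Hsg i); nra).
        apply Rmult_integral in Hs. specialize (hk i Hi).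
        apply Rabs_le. destruct Hs as [Hs|Hs];
          [replace (sg i) with 1 by lra|replace (sg i) with (-1) by lra]; lra.
      + intros t. ring.
    - exists c. split; auto.
      replace (sys_apply m h (fun t j => 0 - - (sg j * k j) * delta 0 t))
        with (fun t o => fsum m (fun i => sg i * v i t o)); auto.
      apply functional_extensionality; intros t; apply functional_extensionality; intros o.
      replace (fun t j => 0 - - (sg j * k j) * delta 0 t) with (fun t j => (sg j * k j) * delta 0 t).
      2:{ apply functional_extensionality; intros t'; apply functional_extensionality; intros j. ring. }
      rewrite sys_imp. apply fsum_ext; intros. unfold v; ring. }
  assert (Hb : bound (sens_set m p k h)) by (exists Sb; intros r Hr; apply SENS; auto).
  destruct (completeness _ Hb (ex_intro _ _ Elt)) as [Delta HD].
  set (nGK := sqrt (fsum m (fun i => sqrt (Ev i) ^ 2))).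
  exists Delta, nG, nGK. split; [exact HD|]. split; [|split].
  - exists (fun i => sqrt (E i)). split; [|reflexivity].
    intros i Hi. exists (E i). split; [|reflexivity].
    replace (sys_apply m h (impulse_input i)) with (col h i); [apply HEj; auto|].
    apply functional_extensionality; intros t; apply functional_extensionality; intros o.
    rewrite sys_impulse; auto.
  - exists (fun i => sqrt (Ev i)). split; [|reflexivity].
    intros i Hi. exists (Ev i). split; [|reflexivity].
    replace (sys_apply m (scale_inputs k h) (impulse_input i)) with (v i); [apply Hv; auto|].
    apply functional_extensionality; intros t; apply functional_extensionality; intros o.
    rewrite sys_impulse; auto.
  - split.
    + apply Rle_trans with (sqrt c); [|apply HD; auto].
      unfold nGK. apply sqrt_le_1_alt. eapply Rle_trans; [|exact Hcle].
      right. apply fsum_ext; intros i Hi. apply pow2_sqrt.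
      unfold Ev. specialize (E0 i Hi). apply Rmult_le_pos; auto. apply Rle_0_sqr.
    + eapply Rle_trans; [|exact SB]. apply HD. intros r Hr; apply SENS; auto.
Qed.
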